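(* For every $p\in\mathbb{N}$ and every polynomial $\widehat{v} = \sum_{\ell=0}^p \widehat{v}_\ell T_\ell$ of degree at most $p$ on $[-1,1]$, defining $\widehat{v}_\ell := 0$ for $\ell>p$, it holds that \[ \sum_{\ell\geq 2} |\widehat{v}_\ell| \;\leq\; p^4 \min_{\substack{\widehat{w}\in\mathbb{P}_p([-1,1]):\\ \widehat{w}'' = \widehat{v}''}} \|\widehat{w}\|_{L^\infty((-1,1))}. \]
   Context: For $k\in\mathbb{N}_0$, $T_k$ denotes the Chebyshev polynomial of the first kind of degree $k$, normalized so that $T_k(1)=1$ (i.e. $T_k(\cos\theta)=\cos(k\theta)$). $\mathbb{P}_p([-1,1])$ denotes the space of real polynomials of degree at most $p$ on $[-1,1]$, and $\widehat{w}''$ denotes the second derivative. *)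

(* Defs.v *)
From HB Require Import structures.
From mathcomp Require Import all_boot all_order all_algebra.
From mathcomp Require Import all_classical all_reals.
Set Implicit Arguments. Unset Strict Implicit. Unset Printing Implicit Defensive.
Import Order.TTheory GRing.Theory Num.Theory.
Local Open Scope ring_scope.
Local Open Scope classical_set_scope.

(* Chebyshev polynomials of the first kind, T_0 = 1, T_1 = X,
   T_{k+2} = 2 X T_{k+1} - T_k  (so T_k(cos t) = cos(k t), T_k(1) = 1). *)
Fixpoint cheb_pair (R : ringType) (k : nat) : {poly R} * {poly R} :=
  match k with
  | 0%N => (1, 'X)
  | k'.+1 => let (a, b) := cheb_pair R k' in (b, 2%:R *: 'X * b - a)
  end.

Definition chebT (R : ringType) (k : nat) : {poly R} := (cheb_pair R k).1.

(* L^infty((-1,1)) norm of a polynomial (continuous, so ess sup = sup). *)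
Definition Linf_norm (R : realType) (w : {poly R}) : R :=
  sup [set `|w.[x]| | x in [set x : R | -1 < x < 1]].

(* Main.v *)
Require Import Defs.
From HB Require Import structures.
From mathcomp Require Import all_boot all_order all_algebra.
From mathcomp Require Import all_classical all_reals.
From mathcomp Require Import trigo ring lra zify.
Local Open Scope classical_set_scope.
Import Order.TTheory GRing.Theory Num.Theory.
Local Open Scope ring_scope.

Section H.
Variable R : realType.

Lemma cheb_pair_cos (t : R) k :
  (cheb_pair R k).1.[cos t] = cos (k%:R * t) /\
  (cheb_pair R k).2.[cos t] = cos (k.+1%:R * t).
Proof.
elim: k => [|k IH] /=.
  by rewrite hornerC hornerX mul0r cos0 mul1r.
case: (cheb_pair R k) IH => a b /= [IHa IHb]; split => //.
rewrite hornerD hornerN hornerM hornerZ hornerX IHa IHb.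
have -> : k.+2%:R * t = k.+1%:R * t + t by rewrite !mulrS; ring.
have -> : k%:R * t = k.+1%:R * t - t by rewrite mulrS; ring.
rewrite !cosD cosN sinN; ring.
Qed.

Lemma cheb_cos (t : R) k : (chebT R k).[cos t] = cos (k%:R * t).
Proof. by case: (cheb_pair_cos t k). Qed.

Lemma sin_natpi m : sin (m%:R * pi) = 0 :> R.
Proof.
elim: m => [|m IH]; first by rewrite mul0r sin0.
by rewrite mulrS mulrDl mul1r sinD IH sinpi; ring.
Qed.

Lemma frac_pi (a b : nat) : (0 < a < b)%N ->
  0 < (pi : R) * (a%:R / b%:R) < pi.
Proof.
move=> /andP[a0 ab]; have b0 : (0 < b)%N by apply: leq_trans ab.
have hb : 0 < b%:R :> R by rewrite ltr0n.
apply/andP; split.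
  by apply: mulr_gt0; [exact: pi_gt0| apply: divr_gt0; rewrite ?ltr0n].
by rewrite gtr_pMr ?pi_gt0 // ltr_pdivrMr // mul1r ltr_nat.
Qed.

Definition th (N j : nat) : R := pi * ((2 * j + 1)%:R / (2 * N)%:R).

Lemma th_in N (j : 'I_N) : 0 < th N j < pi.
Proof. apply: frac_pi; apply/andP; split => //; have := ltn_ord j; lia. Qed.

Lemma sumcos N m : (0 < m < 2 * N)%N ->
  \sum_(j < N) cos (m%:R * th N j) = 0.
Proof.
move=> hm; set a : R := pi * (m%:R / (2 * N)%:R).
have ha := @frac_pi _ _ hm; rewrite -/a in ha.
have sa : 0 < sin a by apply: sin_gt0_pi.
have N0 : (2 * N)%:R != 0 :> R by rewrite pnatr_eq0; lia.
suff : sin a *+ 2 * \sum_(j < N) cos (m%:R * th N j) = 0.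
  by move/eqP; rewrite mulf_eq0 mulrn_eq0 /= (gt_eqF sa) /= => /eqP.
rewrite mulr_sumr -(big_mkord xpredT (fun j => sin a *+ 2 * cos (m%:R * th N j))).
rewrite (telescope_sumr_eq (fun j => sin ((2 * j)%:R * a))) //.
  rewrite muln0 mul0r sin0 subr0.
  have -> : (2 * N)%:R * a = m%:R * pi.
    by rewrite /a mulrC -mulrA divfK // mulrC.
  exact: sin_natpi.
move=> k _.
have -> : m%:R * th N k = (2 * k + 1)%:R * a by rewrite /th /a; ring.
have -> : (2 * k.+1)%:R * a = (2 * k + 1)%:R * a + a.
  have -> : (2 * k.+1 = (2*k+1).+1)%N by lia.
  by rewrite -natr1; ring.
have -> : (2 * k)%:R * a = (2 * k + 1)%:R * a - a by rewrite natrD; ring.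
rewrite !sinD cosN sinN; ring.
Qed.


Lemma cos_prod (x y : R) : cos x * cos y = (cos (x + y) + cos (x - y)) / 2.
Proof. rewrite !cosD cosN sinN; by field. Qed.

Lemma sumcos0 N : \sum_(j < N) cos (0%:R * th N j) = N%:R.
Proof.
under eq_bigr => j _ do rewrite mul0r cos0.
by rewrite sumr_const card_ord.
Qed.

Lemma orth N k l : (k < N)%N -> (0 < l < N)%N ->
  \sum_(j < N) cos (k%:R * th N j) * cos (l%:R * th N j) =
  (k == l)%:R * N%:R / 2.
Proof.
move=> kN lN.
under eq_bigr => j _ do rewrite cos_prod -mulrDl -natrD.
rewrite -mulr_suml big_split /= sumcos ?add0r; last by lia.
case: (ltngtP k l) => [kl|kl|->].
- rewrite (eq_bigr (fun j : 'I_N => cos ((l - k)%:R * th N j))) => [|j _]; last first.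
    by rewrite natrB ?(ltnW kl) // mulrBl -opprB cosN.
  rewrite sumcos; last by lia.
  by rewrite !mul0r.
- rewrite (eq_bigr (fun j : 'I_N => cos ((k - l)%:R * th N j))) => [|j _]; last first.
    by rewrite natrB ?(ltnW kl) // mulrBl.
  rewrite sumcos; last by lia.
  by rewrite !mul0r.
- under eq_bigr => j _ do rewrite subrr -(mul0r (th N j)).
  by rewrite sumcos0 mul1r.
Qed.

Lemma cos_th_in N (j : 'I_N) : -1 < cos (th N j) < 1.
Proof.
have s0 : 0 < sin (th N j) by apply: sin_gt0_pi; exact: th_in.
have hs : cos (th N j) ^+ 2 < 1.
  by rewrite cos2sin2 ltrBlDr ltrDl exprn_gt0.
have := cos_geN1 (th N j); have := cos_le1 (th N j).
rewrite -ltr_norml; rewrite -(ltr_pXn2r (n:=2)) //; last by rewrite qualifE /=.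
by rewrite real_normK ?num_real // expr1n.
Qed.

End H.


Theorem lemma3p3 (R : realType) (p : nat) (c : nat -> R) (w : {poly R}) :
  (size w <= p.+1)%N ->
  w^`(2) = (\sum_(l < p.+1) c l *: chebT R l)^`(2) ->
  \sum_(2 <= l < p.+1) `|c l| <= (p ^ 4)%:R * Linf_norm w.
Proof.
move=> _ h2.
set N := p.+1.
set v := \sum_(l < N) c l *: chebT R l.
set u := w - v.
have hu2 : u^`(2) = 0 by rewrite /u derivnB h2 subrr.
have hu : forall i, u`_(2 + i) = 0.
  move=> i; have : u^`(2)`_i = 0 by rewrite hu2 coef0.
  rewrite coef_derivn => /eqP; rewrite mulrn_eq0 => /orP[|/eqP //].
  by rewrite eqn0Ngt ffact_gt0 leq_addr.
have hue : u = (u`_0)%:P + u`_1 *: 'X.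
  apply/polyP => i; rewrite coefD coefC coefZ coefX.
  case: i => [|[|i]] /=; first by rewrite mulr0 addr0.
    by rewrite mulr1 add0r.
  by rewrite mulr0 addr0 (hu i).
have hw : forall x, w.[x] = v.[x] + u`_0 + u`_1 * x.
  move=> x; have -> : w = v + u by rewrite /u addrC subrK.
  by rewrite hornerD {1}hue hornerD hornerC hornerZ hornerX addrA.
have hv : forall t, v.[cos t] = \sum_(k < N) c k * cos (k%:R * t).
  by move=> t; rewrite /v horner_sum; apply: eq_bigr => k _; rewrite hornerZ cheb_cos.
have key : forall l, (2 <= l < N)%N ->
    \sum_(j < N) w.[cos (th R N j)] * cos (l%:R * th R N j) = c l * N%:R / 2.
  move=> l /andP[l2 lN].
  have l0 : (0 < l < N)%N by rewrite lN (leq_trans _ l2).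
  under eq_bigr => j _ do rewrite hw hv !mulrDl.
  rewrite !big_split /=.
  have -> : \sum_(j < N) u`_0 * cos (l%:R * th R N j) = 0.
    rewrite -mulr_sumr.
    rewrite (eq_bigr (fun j : 'I_N => cos (0%:R * th R N j) * cos (l%:R * th R N j))) => [|j _].
      rewrite orth //; have -> : (0%N == l) = false by case: (l) l2.
      by rewrite !mul0r mulr0.
    by rewrite mul0r cos0 mul1r.
  have -> : \sum_(j < N) u`_1 * cos (th R N j) * cos (l%:R * th R N j) = 0.
    rewrite (eq_bigr (fun j : 'I_N => u`_1 * (cos (1%:R * th R N j) * cos (l%:R * th R N j)))) => [|j _]; last by rewrite mul1r -mulrA.
    rewrite -mulr_sumr orth ?(ltn_trans l2 lN) //.
    have -> : (1%N == l) = false by case: (l) l2 => [|[|]].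
    by rewrite !mul0r mulr0.
  rewrite !addr0.
  under eq_bigr => j _ do rewrite mulr_suml.
  rewrite exchange_big /=.
  under eq_bigr => k _ do (under eq_bigr => j _ do rewrite -mulrA; rewrite -mulr_sumr orth //).
  rewrite (bigD1 (Ordinal lN)) //= eqxx mul1r mulrA big1 ?addr0 //.
  move=> k hk; have -> : (k == l :> nat) = false.
    by apply: contraNF hk => /eqP hk'; apply/eqP; apply: val_inj.
  by rewrite !mul0r mulr0.
set M := Linf_norm w.
have hM : forall x, -1 < x < 1 -> `|w.[x]| <= M.
  move=> x hx; rewrite /M /Linf_norm.
  apply: ub_le_sup; last by exists x.
  exists (\sum_(i < size w) `|w`_i|) => _ [y /andP[y1 y2] <-].
  rewrite horner_coef; apply: le_trans (ler_norm_sum _ _ _) _.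
  apply: ler_sum => i _; rewrite normrM normrX.
  apply: ler_piMr => //; apply: exprn_ile1 => //.
  by rewrite ler_norml !ltW.
have hM0 : 0 <= M by apply: le_trans (hM 0 _); rewrite ?normr_ge0 // ltrN10 ltr01.
have hc : forall l, (2 <= l < N)%N -> `|c l| <= 2 * M.
  move=> l hl; have := key l hl => hk.
  have N0 : 0 < N%:R :> R by rewrite ltr0n.
  rewrite -(ler_pM2r N0) -normr_nat -normrM.
  have -> : c l * N%:R = 2 * (c l * N%:R / 2) by field.
  rewrite -hk normrM ger0_norm // -mulrA ler_pM2l // mulrC.
  apply: le_trans (ler_norm_sum _ _ _) _.
  apply: le_trans (_ : \sum_(j < N) M <= _).
    apply: ler_sum => j _; rewrite normrM.
    apply: le_trans (hM _ (cos_th_in R N j)).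
    by apply: ler_piMr => //; exact: cos_max.
  by rewrite sumr_const card_ord normr_nat mulr_natl.
apply: le_trans (ler_sum_nat hc) _.
rewrite sumr_const_nat.
have -> : 2 * M *+ (N - 2) = ((N - 2) * 2)%:R * M by rewrite -mulr_natl natrM; ring.
apply: ler_wpM2r => //; rewrite ler_nat /N.
case: p {hc N v u h2 hu2 hu hue hw hv key} => [//|q].
have -> : (q.+2 - 2 = q)%N by lia.
rewrite !expnS expn0 muln1; nia.
Qed.
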